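(* Let $m,d,k\ge1$ be integers. If the hypergrid $\mathcal{H}_{m,d}$ has a Steiner $k$-TC-spanner $H$, then it also has a (non-Steiner) $k$-TC-spanner with at most as many edges as $H$.
   Context: $\mathcal{H}_{m,d}$ is the directed graph on $[m]^d$ with an edge $(x,y)$ whenever $y$ and $x$ differ in exactly one coordinate $i$ with $y_i-x_i=1$. For a directed graph $G=(V,E)$, a $k$-TC-spanner is a graph $H=(V,E_H)$ with $E_H$ contained in the transitive closure of $G$ such that whenever $v$ is reachable from $u$ in $G$, $H$ has a path from $u$ to $v$ of length at most $k$. A Steiner $k$-TC-spanner is a directed graph $H=(V_H,E_H)$ with $V\subseteq V_H$ such that for all $u,v\in V$: if $v$ is reachable from $u$ in $G$ then $H$ has a path from $u$ to $v$ of length at most $k$, and otherwise $v$ is not reachable from $u$ in $H$. *)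

(* Defs.v *)
From mathcomp Require Import all_boot.
Set Implicit Arguments. Unset Strict Implicit. Unset Printing Implicit Defensive.

(* The hypergrid H_{m,d}: vertices [m]^d encoded as {ffun 'I_d -> 'I_m}
   (coordinate values 0..m-1 instead of 1..m); edge (x,y) iff y and x differ
   in exactly one coordinate i with y_i - x_i = 1. *)
Definition hypergrid_edge (m d : nat) : rel {ffun 'I_d -> 'I_m} :=
  fun x y => [exists i : 'I_d, (val (y i) == (val (x i)).+1) &&
                               [forall j : 'I_d, (j != i) ==> (y j == x j)]].

Definition path_le (T : finType) (E : rel T) (k : nat) (u v : T) : Prop :=
  exists p : seq T, size p <= k /\ path E u p /\ last u p = v.

Definition num_edges (T : finType) (E : rel T) : nat :=
  #|[set p : T * T | E p.1 p.2]|.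

Definition TC_spanner (V : finType) (e : rel V) (k : nat) (E : rel V) : Prop :=
  (forall u v, E u v -> connect e u v) /\
  (forall u v, connect e u v -> path_le E k u v).

Definition Steiner_TC_spanner (V : finType) (e : rel V) (k : nat)
    (T : finType) (f : V -> T) (E : rel T) : Prop :=
  injective f /\
  (forall u v : V,
      (connect e u v -> path_le E k (f u) (f v)) /\
      (~~ connect e u v -> ~~ connect E (f u) (f v))).

(* Main.v *)
Require Import Defs.
From mathcomp Require Import all_boot zify.
Set Implicit Arguments. Unset Strict Implicit. Unset Printing Implicit Defensive.

Lemma edge_le m d (x y : {ffun 'I_d -> 'I_m}) :
  hypergrid_edge x y -> forall i, val (x i) <= val (y i).
Proof.
move=> /existsP[i /andP[/eqP hi /forallP hj]] j.
case: (eqVneq j i) => [->|ne]; first by rewrite hi.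
by move: (hj j); rewrite ne /= => /eqP ->.
Qed.

Lemma connect_le m d (x y : {ffun 'I_d -> 'I_m}) :
  connect (@hypergrid_edge m d) x y -> forall i, val (x i) <= val (y i).
Proof.
move=> /connectP[p]; elim: p x => [|z p IH] x /=; first by move=> _ -> i.
move=> /andP[hxz hp] hl i; apply: leq_trans (edge_le hxz i) (IH z hp hl i).
Qed.

Lemma le_connect m d (x y : {ffun 'I_d -> 'I_m}) :
  (forall i, val (x i) <= val (y i)) -> connect (@hypergrid_edge m d) x y.
Proof.
move Hn: (\sum_i (val (y i) - val (x i))) => n.
elim: n x Hn => [|n IH] x Hn hle.
  have -> : x = y.
    apply/ffunP => i; apply: val_inj; apply/eqP; rewrite eqn_leq hle /=.
    have : val (y i) - val (x i) <= 0 by rewrite -Hn (bigD1 i) //= leq_addr.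
    by rewrite leqn0 subn_eq0.
  exact: connect0.
have [i hi] : exists i, val (x i) < val (y i).
  case: (pickP (fun i => val (x i) < val (y i))) => [i hi|H]; first by exists i.
  move: Hn; rewrite big1 // => j _.
  by apply/eqP; rewrite subn_eq0; move: (H j) => /= /negbT; rewrite -leqNgt.
have hlt : (val (x i)).+1 < m by apply: leq_ltn_trans hi (ltn_ord _).
pose x' := [ffun j => if j == i then Ordinal hlt else x j].
have hx' : forall j, x' j = if j == i then Ordinal hlt else x j by move=> j; rewrite ffunE.
clearbody x'.
have hedge : hypergrid_edge x x'.
  rewrite /hypergrid_edge; apply/existsP; exists i.
  rewrite hx' eqxx /= eqxx /=.
  apply/forallP => j; rewrite hx'; by case: (eqVneq j i) => [_|_] /=.
apply: connect_trans (connect1 hedge) _.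
apply: (IH x').
  move: Hn; rewrite (bigD1 i) //= (bigD1 i (P := predT)) //= hx' eqxx /=.
  have E : \sum_(j < d | j != i) (val (y j) - val (x' j)) = \sum_(j < d | j != i) (val (y j) - val (x j)).
    by apply: eq_bigr => j /negbTE hj; rewrite hx' hj.
  rewrite E.
  move=> Hn2; apply: succn_inj; rewrite -Hn2 -addSn subnSK //.
move=> j; rewrite hx'; case: (eqVneq j i) => [->|_] //.
Qed.

Theorem corollary2 (m d k : nat) (hm : 1 <= m) (hd : 1 <= d) (hk : 1 <= k)
    (T : finType) (f : {ffun 'I_d -> 'I_m} -> T) (EH : rel T) :
  Steiner_TC_spanner (@hypergrid_edge m d) k f EH ->
  exists E : rel {ffun 'I_d -> 'I_m},
    TC_spanner (@hypergrid_edge m d) k E /\ num_edges E <= num_edges EH.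
Proof.
case: m hm f => [//|m'] _ f [finj H].
have hreach : forall u u', connect EH (f u') (f u) -> forall i, val (u' i) <= val (u i).
  move=> u u' c; case: (boolP (connect (@hypergrid_edge m'.+1 d) u' u)) => hc.
    exact: connect_le.
  by move: ((H u' u).2 hc); rewrite c.
pose mx (t : T) (i : 'I_d) := \max_(u | connect EH (f u) t) val (u i).
have mxlt : forall t i, mx t i < m'.+1.
  move=> t i; rewrite ltnS; apply/bigmax_leqP => u _; rewrite -ltnS; exact: ltn_ord.
pose pi (t : T) : {ffun 'I_d -> 'I_m'.+1} := [ffun i => inord (mx t i)].
have hpi : forall t i, val (pi t i) = mx t i by move=> t i; rewrite ffunE /= inordK.
have mono : forall a b, EH a b -> forall i, val (pi a i) <= val (pi b i).
  move=> a b hab i; rewrite !hpi; apply/bigmax_leqP => u hu.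
  apply: leq_bigmax_cond; exact: connect_trans hu (connect1 hab).
have fixp : forall u, pi (f u) = u.
  move=> u; apply/ffunP => i; apply: val_inj; rewrite hpi; apply/eqP; rewrite eqn_leq.
  apply/andP; split.
    by apply/bigmax_leqP => u' hu'; apply: hreach.
  by rewrite -hpi; move: (leq_bigmax_cond (P := fun u0 => connect EH (f u0) (f u)) (F := fun u0 => val (u0 i)) u (connect0 _ (f u))); rewrite hpi.
pose S := [set (pi p.1, pi p.2) | p in [set p : T * T | EH p.1 p.2]].
exists (fun x y => (x, y) \in S); split; last first.
  rewrite /num_edges.
  have -> : [set p | (p.1, p.2) \in S] = S by apply/setP => -[x y]; rewrite inE.
  exact: leq_imset_card.
split.
  move=> x y /imsetP[[a b]]; rewrite inE /= => hab [-> ->].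
  apply: le_connect; exact: mono.
move=> u v c; have [p [hs [hp hl]]] := (H u v).1 c.
exists (map pi p); split; first by rewrite size_map.
split.
  rewrite -{1}(fixp u); apply: homo_path hp => a b hab.
  by apply/imsetP; exists (a, b); rewrite // inE.
by rewrite -{1}(fixp u) last_map hl fixp.
Qed.
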